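(* For every finite $\sigma$-structure $\mathscr{A}$, $\mathsf{td}(\mathscr{A})=\kappa^{\mathbb{E}}(\mathscr{A})$.
   Context: $\mathbb{E}_k\mathscr{A}$ ($k\ge1$): universe $A^{\le k}$ (non-empty sequences of length $\le k$); $R(s_1,\dots,s_n)$ iff the $s_i$ are pairwise prefix-comparable and $R^{\mathscr{A}}$ holds of their last elements; $\varepsilon[a_1,\dots,a_j]=a_j$; $\delta[a_1,\dots,a_j]=[[a_1],[a_1,a_2],\dots,[a_1,\dots,a_j]]$; $\mathbb{E}_k h[a_1,\dots,a_j]=[h(a_1),\dots,h(a_j)]$. An $\mathbb{E}_k$-coalgebra on $\mathscr{A}$ is a homomorphism $\alpha:\mathscr{A}\to\mathbb{E}_k\mathscr{A}$ with $\delta\circ\alpha=\mathbb{E}_k\alpha\circ\alpha$ and $\varepsilon\circ\alpha=\mathrm{id}$. $\kappa^{\mathbb{E}}(\mathscr{A})$ is the least $k$ such that an $\mathbb{E}_k$-coalgebra on $\mathscr{A}$ exists. Gaifman graph $\mathcal{G}(\mathscr{A})=(A,\frown)$: $a\frown a'$ iff $a\ne a'$ and both occur in a common tuple of some $R^{\mathscr{A}}$. Forest: poset where predecessors of each element form a finite chain; height = max chain size. Forest cover of $(V,\frown)$: forest order on $V$ in which adjacent vertices are comparable. $\mathsf{td}(\mathscr{A})$ is the minimum height of a forest cover of $\mathcal{G}(\mathscr{A})$. *)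

(* Defs.v *)
From Stdlib Require Import ClassicalEpsilon.
From mathcomp Require Import all_boot.
Set Implicit Arguments. Unset Strict Implicit. Unset Printing Implicit Defensive.

(* A relational signature: symbols [S] with arities [ar].  A finite
   sigma-structure is a finite type [A] together with interpretations
   [RA R : (ar R).-tuple A -> Prop]. *)

Definition min_nat (P : nat -> Prop) : nat :=
  epsilon (inhabits 0) (fun n => P n /\ forall m, P m -> n <= m).

Section Defs.
Variables (S : Type) (ar : S -> nat) (A : finType).
Variable RA : forall R : S, (ar R).-tuple A -> Prop.
Arguments RA : clear implicits.

Definition gaifman_adj (a b : A) : Prop :=
  a != b /\ exists (R : S) (t : (ar R).-tuple A), RA R t /\ a \in t /\ b \in t.

Definition is_chain (le : A -> A -> Prop) (C : {set A}) : Prop :=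
  forall x y, x \in C -> y \in C -> le x y \/ le y x.

(* partial order in which the predecessors of every element form a chain
   (finiteness of that chain is automatic since A is finite) *)
Definition is_forest (le : A -> A -> Prop) : Prop :=
  (forall x, le x x) /\
  (forall x y, le x y -> le y x -> x = y) /\
  (forall x y z, le x y -> le y z -> le x z) /\
  (forall x y z, le y x -> le z x -> le y z \/ le z y).

Definition forest_height (le : A -> A -> Prop) (h : nat) : Prop :=
  (exists C : {set A}, is_chain le C /\ #|C| = h) /\
  (forall C : {set A}, is_chain le C -> #|C| <= h).

Definition forest_cover (le : A -> A -> Prop) : Prop :=
  is_forest le /\ forall a b, gaifman_adj a b -> le a b \/ le b a.

Definition td : nat :=
  min_nat (fun h => exists le, forest_cover le /\ forest_height le h).

(* the universe of E_k A: non-empty sequences of length <= k *)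
Definition in_Ek (k : nat) (s : seq A) : bool := 0 < size s <= k.

Definition prefix_comparable (s t : seq A) : bool := prefix s t || prefix t s.

(* last element (counit epsilon), as an option to avoid default values *)
Definition lastopt (s : seq A) : option A := ohead (rev s).

Definition Ek_rel (R : S) (u : (ar R).-tuple (seq A)) : Prop :=
  (forall i j, prefix_comparable (tnth u i) (tnth u j)) /\
  exists t : (ar R).-tuple A, [seq lastopt s | s <- u] = [seq Some a | a <- t]
                              /\ RA R t.

Definition Ek_delta (s : seq A) : seq (seq A) :=
  [seq take i.+1 s | i <- iota 0 (size s)].

Definition Ek_coalgebra (k : nat) (alpha : A -> seq A) : Prop :=
  (forall a, in_Ek k (alpha a)) /\
  (forall (R : S) (t : (ar R).-tuple A), RA R t -> Ek_rel (map_tuple alpha t)) /\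
  (forall a, Ek_delta (alpha a) = map alpha (alpha a)) /\
  (forall a, lastopt (alpha a) = Some a).

Definition kappaE : nat :=
  min_nat (fun k => 1 <= k /\ exists alpha, Ek_coalgebra k alpha).

End Defs.

(* Main.v *)
Require Import Defs.
From Stdlib Require Import ClassicalEpsilon.
From mathcomp Require Import all_boot.
Set Implicit Arguments. Unset Strict Implicit. Unset Printing Implicit Defensive.

Lemma least_ex (P : nat -> Prop) n : P n -> exists m, P m /\ forall k, P k -> m <= k.
Proof.
elim: n {-2}n (leqnn n) => [|n IH] m Hm Pm.
  exists m; split=> // k _; by rewrite leqn0 in Hm; rewrite (eqP Hm).
case: (classic (exists k, k < m /\ P k)) => [[k [Hk Pk]]|Hno].
  by apply: (IH k) => //; rewrite -ltnS (leq_trans Hk Hm).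
exists m; split=> // k Pk; rewrite leqNgt; apply/negP=> Hk; apply: Hno; by exists k.
Qed.

Lemma min_nat_spec (P : nat -> Prop) n : P n ->
  P (min_nat P) /\ forall k, P k -> min_nat P <= k.
Proof. move=> Pn; exact: (epsilon_spec (inhabits 0) (fun n => P n /\ forall m, P m -> n <= m) (least_ex Pn)). Qed.

Lemma max_ex (P : nat -> Prop) b : P 0 -> (forall n, P n -> n <= b) ->
  exists h, P h /\ forall n, P n -> n <= h.
Proof.
move=> P0; elim: b => [|b IH] Hb.
  by exists 0; split=> // n /Hb.
case: (classic (P b.+1)) => Hb1; first by exists b.+1.
apply: IH => n Pn; have := Hb n Pn; rewrite leq_eqVlt => /orP[/eqP E|//].
by subst n.
Qed.

Section Gen.
Variables (S : Type) (ar : S -> nat) (A : finType).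
Variable RA : forall R : S, (ar R).-tuple A -> Prop.

Lemma forest_height_ex (le : A -> A -> Prop) :
  exists h, forest_height le h.
Proof.
have P0 : exists C : {set A}, is_chain le C /\ #|C| = 0.
  by exists set0; split; [move=> x y; rewrite inE | exact: cards0].
have Pb : forall n, (exists C : {set A}, is_chain le C /\ #|C| = n) -> n <= #|A|.
  by move=> n [C [_ <-]]; exact: max_card.
have [h [[C [HC1 HC2]] Hmax]] := max_ex P0 Pb.
exists h; split; first by exists C.
move=> C' HC'; apply: Hmax; by exists C'.
Qed.

End Gen.

Section Dir2.
Variables (S : Type) (ar : S -> nat) (A : finType).
Variable RA : forall R : S, (ar R).-tuple A -> Prop.
Variables (k : nat) (alpha : A -> seq A).
Hypothesis Halpha : Ek_coalgebra RA k alpha.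

Definition lep (a b : A) : Prop := prefix (alpha a) (alpha b).

Lemma prefix_eq_size (s t : seq A) : prefix s t -> size s = size t -> s = t.
Proof. by rewrite prefixE => /eqP E Hs; rewrite -E Hs take_size. Qed.

Lemma alpha_inj a b : alpha a = alpha b -> a = b.
Proof.
case: Halpha => _ [_ [_ Hl]] E; have := Hl a; rewrite E Hl; by case.
Qed.

Lemma prefix_comm (s t u : seq A) : prefix s u -> prefix t u -> prefix s t \/ prefix t s.
Proof.
rewrite !prefixE => /eqP Es /eqP Et.
case: (leqP (size s) (size t)) => H.
  by left; rewrite -Et -take_min (minn_idPl H) Es.
by right; rewrite -Es -take_min (minn_idPl (ltnW H)) Et.
Qed.

Lemma dir2_forest : forest_cover RA lep.
Proof.
split; first split.
- by move=> x; exact: prefix_refl.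
split.
- move=> x y H1 H2; apply: alpha_inj; apply (prefix_eq_size H1).
  by apply/anti_leq; rewrite (size_prefix H1) (size_prefix H2).
split.
- move=> x y z; rewrite /lep => H1 H2; exact: prefix_trans H1 H2.
- move=> x y z; exact: prefix_comm.
move=> a b [_ [R [t [Ht [Ha Hb]]]]].
case: Halpha => _ [Hhom _].
have [Hpc _] := Hhom R t Ht.
case/tnthP: Ha => i ->; case/tnthP: Hb => j ->.
have := Hpc i j; rewrite !tnth_map /prefix_comparable => /orP[H|H]; [left|right]; exact: H.
Qed.

Lemma dir2_chain (C : {set A}) : is_chain lep C -> #|C| <= k.
Proof.
move=> HC.
have Hinj : {in enum C &, injective (fun x => size (alpha x))}.
  move=> x y; rewrite !mem_enum => Hx Hy E; apply: alpha_inj.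
  case: (HC x y Hx Hy) => H; [|apply/esym]; apply: prefix_eq_size H _ => //.
rewrite cardE -(size_map (fun x => size (alpha x))) -(size_iota 1 k).
apply: uniq_leq_size; first by rewrite map_inj_in_uniq ?enum_uniq.
move=> n /mapP [x _ ->]; case: Halpha => Hk _; have := Hk x.
by rewrite /in_Ek mem_iota => /andP[H1 H2]; rewrite H1 /= add1n ltnS.
Qed.

End Dir2.

Section Dir1.
Variables (S : Type) (ar : S -> nat) (A : finType).
Variable RA : forall R : S, (ar R).-tuple A -> Prop.
Variables (le : A -> A -> Prop) (h : nat).
Hypothesis Hcov : forest_cover RA le.
Hypothesis Hh : forest_height le h.

Definition leb (x y : A) : bool := if excluded_middle_informative (le x y) then true else false.

Lemma lebP x y : reflect (le x y) (leb x y).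
Proof. rewrite /leb; case: excluded_middle_informative => H; by constructor. Qed.

Lemma le_refl x : le x x. Proof. by case: Hcov => [[H _] _]. Qed.
Lemma le_anti x y : le x y -> le y x -> x = y. Proof. by case: Hcov => [[_ [H _]] _]; apply: H. Qed.
Lemma le_trans x y z : le x y -> le y z -> le x z. Proof. by case: Hcov => [[_ [_ [H _]]] _]; apply: H. Qed.
Lemma le_pred x y z : le y x -> le z x -> le y z \/ le z y. Proof. by case: Hcov => [[_ [_ [_ H]]] _]; apply: H. Qed.

Lemma leb_refl : reflexive leb. Proof. by move=> x; apply/lebP; exact: le_refl. Qed.
Lemma leb_trans : transitive leb.
Proof. move=> y x z /lebP H1 /lebP H2; apply/lebP; exact: le_trans H1 H2. Qed.
Lemma leb_anti : antisymmetric leb.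
Proof. by move=> x y /andP[/lebP H1 /lebP H2]; apply: le_anti. Qed.

Definition alph (a : A) : seq A := sort leb (enum [pred x | leb x a]).

Lemma alph_sorted a : sorted leb (alph a).
Proof.
apply: (@sort_sorted_in _ [pred x | leb x a]); last by apply/allP=> x; rewrite mem_enum.
move=> x y /lebP Hx /lebP Hy; case: (le_pred Hx Hy) => /lebP -> //; by rewrite orbT.
Qed.

Lemma alph_uniq a : uniq (alph a).
Proof. by rewrite sort_uniq enum_uniq. Qed.

Lemma mem_alph a x : (x \in alph a) = leb x a.
Proof. by rewrite mem_sort mem_enum. Qed.

Lemma alph_char a s : sorted leb s -> uniq s -> (forall x, (x \in s) = leb x a) -> alph a = s.
Proof.
move=> Hs Hu Hm; apply: (sorted_eq leb_trans leb_anti (alph_sorted a) Hs).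
apply: uniq_perm; [exact: alph_uniq | exact: Hu | move=> x; by rewrite mem_alph Hm].
Qed.

Lemma alph_take a i : i < size (alph a) -> take i.+1 (alph a) = alph (nth a (alph a) i).
Proof.
move=> Hi; set s := alph a; set b := nth a s i.
have Hsrt := alph_sorted a; have Hu := alph_uniq a.
have Hbs : b \in s by exact: mem_nth.
have Hba : le b a by apply/lebP; rewrite -mem_alph.
symmetry; apply: alph_char; [exact: take_sorted | exact: take_uniq | move=> x].
have Hsz : size (take i.+1 s) = i.+1 by rewrite size_takel.
apply/idP/idP.
  move=> Hx; have Hj := index_mem x (take i.+1 s); rewrite Hx Hsz in Hj.
  have := nth_index a Hx; rewrite nth_take // => <-.
  apply: (sorted_leq_nth leb_trans leb_refl a Hsrt) => //.
  by rewrite inE; exact: leq_trans Hj Hi.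
move=> /lebP Hxb.
have Hxs : x \in s by rewrite mem_alph; apply/lebP; exact: le_trans Hxb Hba.
set j := index x s.
have Hjs : j < size s by rewrite index_mem.
case: (leqP j i) => Hji.
  rewrite -(nth_index a Hxs) -/j -(nth_take a (n0 := i.+1)) //; apply: mem_nth; by rewrite Hsz.
have /lebP Hbx : leb b x.
  rewrite -(nth_index a Hxs); apply: (sorted_leq_nth leb_trans leb_refl a Hsrt) => //.
  exact: ltnW.
have E := le_anti Hbx Hxb.
have : j = i by rewrite /j -E /b index_uniq.
by move=> E'; rewrite E' ltnn in Hji.
Qed.

Lemma alph_last a : lastopt (alph a) = Some a.
Proof.
rewrite /lastopt.
have Ha : a \in alph a by rewrite mem_alph leb_refl.
have Hsrt := alph_sorted a.
case/lastP E: (alph a) => [|s y]; first by rewrite E in Ha.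
rewrite rev_rcons /=; congr Some.
have Hy : y \in alph a by rewrite E mem_rcons mem_head.
have Hsz : size (alph a) = (size s).+1 by rewrite E size_rcons.
have Hyn : nth a (alph a) (size s) = y by rewrite E nth_rcons ltnn eqxx.
apply: le_anti; first by apply/lebP; rewrite -mem_alph.
apply/lebP; rewrite -(nth_index a Ha) -Hyn.
apply: (sorted_leq_nth leb_trans leb_refl a Hsrt).
- by rewrite inE index_mem.
- by rewrite inE Hsz.
- by rewrite -ltnS -Hsz index_mem.
Qed.

Lemma alph_coalg : Ek_coalgebra RA h alph.
Proof.
have Hpref : forall x y, le x y -> prefix (alph x) (alph y).
  move=> x y Hxy.
  have Hx : x \in alph y by rewrite mem_alph; apply/lebP.
  have Hi : index x (alph y) < size (alph y) by rewrite index_mem.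
  rewrite -(nth_index y Hx) -alph_take //; exact: prefix_take.
split.
  move=> a; rewrite /in_Ek; apply/andP; split.
    by case: (alph a) (alph_last a).
  case: Hh => _ Hmax.
  rewrite -(card_uniqP (alph_uniq a)) -cardsE; apply: Hmax.
  move=> x y; rewrite !inE !mem_alph => /lebP Hx /lebP Hy; exact: le_pred Hx Hy.
split.
  move=> R t Ht; split; last first.
    exists t; split=> //; rewrite /= -map_comp; apply: eq_map => x /=; exact: alph_last.
  move=> i j; rewrite !tnth_map /prefix_comparable.
  case: (eqVneq (tnth t i) (tnth t j)) => [->|Hne]; first by rewrite prefix_refl.
  case: Hcov => _ Hc.
  have Hadj : gaifman_adj RA (tnth t i) (tnth t j).
    by split=> //; exists R, t; split=> //; rewrite !mem_tnth.
  by case: (Hc _ _ Hadj) => /Hpref ->; rewrite ?orbT.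
split; last exact: alph_last.
move=> a; rewrite /Ek_delta.
have -> : map alph (alph a) = map alph (mkseq (nth a (alph a)) (size (alph a))) by rewrite mkseq_nth.
rewrite /mkseq -map_comp.
apply/eq_in_map => i; rewrite mem_iota add0n => /andP[_ Hi] /=.
exact: alph_take.
Qed.

End Dir1.

Theorem mainTheorem12 (S : Type) (ar : S -> nat) (A : finType)
  (RA : forall R : S, (ar R).-tuple A -> Prop) (hA : 0 < #|A|) :
  td RA = kappaE RA.
Proof.
pose lin (x y : A) : Prop := enum_rank x <= enum_rank y.
have Hlin : forest_cover RA lin.
  split; last by move=> a b _; rewrite /lin; case/orP: (leq_total (enum_rank a) (enum_rank b)); auto.
  split; first by move=> x; exact: leqnn.
  split; first by move=> x y H1 H2; apply: enum_rank_inj; apply: val_inj; apply/anti_leq/andP.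
  split; first by move=> x y z; exact: leq_trans.
  by move=> x y z _ _; rewrite /lin; case/orP: (leq_total (enum_rank y) (enum_rank z)); auto.
have [hl Hhl] := forest_height_ex lin.
have [[le [Hc Hh]] Htdmin] := min_nat_spec (P := fun h => exists le, forest_cover RA le /\ forest_height le h)
  (ex_intro _ lin (conj Hlin Hhl)).
rewrite -/(td RA) in Hc Hh Htdmin *.
have Htd1 : 1 <= td RA.
  case/card_gt0P: hA => a0 _; case: Hh => _ Hmax.
  rewrite -(cards1 a0); apply: Hmax => x y; rewrite !inE => /eqP -> /eqP ->.
  left; exact: le_refl Hc a0.
have Hk : (fun k => 1 <= k /\ exists alpha, Ek_coalgebra RA k alpha) (td RA).
  split=> //; exists (alph le); exact: alph_coalg.
have [[Hk1 [alpha Hal]] Hkmin] := min_nat_spec (P := fun k => 1 <= k /\ exists alpha, Ek_coalgebra RA k alpha) Hk.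
rewrite -/(kappaE RA) in Hk1 Hal Hkmin *.
apply/anti_leq/andP; split; last exact: Hkmin.
have Hc2 := dir2_forest Hal.
have [h2 [[C [HC HC2]] Hmax2]] := forest_height_ex (lep alpha).
apply: leq_trans (Htdmin h2 _) _.
  by exists (lep alpha); split=> //; split=> //; exists C.
rewrite -HC2; exact (dir2_chain Hal HC).
Qed.
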